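(* Let $\mathfrak g_1,\mathfrak g_2$ be finite-dimensional complex Lie algebras. Then the Jordan–Kronecker invariants of $\mathfrak g_1\oplus\mathfrak g_2$ are the union (as multisets of Jordan tuples and Kronecker sizes) of the Jordan–Kronecker invariants of $\mathfrak g_1$ and of $\mathfrak g_2$; in particular Jordan tuples coming from $\mathfrak g_1$ and from $\mathfrak g_2$ correspond to different eigenvalues.
   Context: For a finite-dimensional complex Lie algebra $\mathfrak g$ and $x\in\mathfrak g^*$, let $\mathcal A_x$ be the skew form $(\xi,\eta)\mapsto\langle x,[\xi,\eta]\rangle$ on $\mathfrak g$. By the Jordan–Kronecker theorem, a pair of skew forms $A,B$ on a finite-dimensional complex vector space admits a basis in which both are block-diagonal with blocks of the types: Jordan $2n\times2n$ block with eigenvalue $\mu$ ($A_i=\begin{pmatrix}0&J_\mu\\-J_\mu^T&0\end{pmatrix}$, $B_i=\begin{pmatrix}0&I_n\\-I_n&0\end{pmatrix}$), Jordan block with eigenvalue $\infty$ (roles of $A_i,B_i$ swapped), or Kronecker $(2k-1)\times(2k-1)$ block ($k\ge1$; $A_i=\begin{pmatrix}0&P\\-P^T&0\end{pmatrix}$, $B_i=\begin{pmatrix}0&Q\\-Q^T&0\end{pmatrix}$, $P=(I_{k-1}|0)$, $Q=(0|I_{k-1})$); block numbers and sizes grouped by eigenvalue are unique. For $(x,a)$ in a nonempty Zariski open subset of $\mathfrak g^*\times\mathfrak g^*$ the pair $(\mathcal A_x,\mathcal A_a)$ has the same Kronecker sizes $2k_1-1,\dots,2k_q-1$ and the same multiset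 of Jordan tuples $J_{\lambda_i}(2n_{i1},\dots,2n_{is_i})$ (for each distinct eigenvalue $\lambda_i$, the sizes of the Jordan blocks with that eigenvalue, $n_{i1}\ge\dots\ge n_{is_i}$; the eigenvalues depend on $(x,a)$ and are regarded as distinct formal symbols). These are the Jordan–Kronecker (JK) invariants of $\mathfrak g$. *)

(* Defs.v *)
From HB Require Import structures.
From mathcomp Require Import all_boot all_algebra.
From mathcomp Require Import complex.
From mathcomp Require Import reals.
From mathcomp Require mpoly.

Set Implicit Arguments.
Unset Strict Implicit.
Unset Printing Implicit Defensive.

Import GRing.Theory.
Local Open Scope ring_scope.

Section JK.
Variable F : fieldType.

(* A Lie algebra of dimension n, given by structure constants in a basis
   e_0..e_{n-1}:  [e_i, e_j] = \sum_k c i j k e_k. *)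
Definition struct_consts (n : nat) := 'I_n -> 'I_n -> 'I_n -> F.

Definition is_lie_sc (n : nat) (c : struct_consts n) : Prop :=
  (forall i k, c i i k = 0) /\
  (forall i j k, c i j k = - c j i k) /\
  (* Jacobi: [[e_i,e_j],e_l] + [[e_j,e_l],e_i] + [[e_l,e_i],e_j] = 0 *)
  (forall i j l m,
     \sum_(k < n) (c i j k * c k l m + c j l k * c k i m + c l i k * c k j m)
     = 0).

Definition dsum_sc (n1 n2 : nat) (c1 : struct_consts n1) (c2 : struct_consts n2)
  : struct_consts (n1 + n2) :=
  fun i j k =>
    match split i, split j, split k with
    | inl i', inl j', inl k' => c1 i' j' k'
    | inr i', inr j', inr k' => c2 i' j' k'
    | _, _, _ => 0
    end.

(* x in g^* given by its coordinates in the dual basis;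
   A_x (xi, eta) = <x, [xi, eta]>, as a Gram matrix in the basis e. *)
Definition skew_form (n : nat) (c : struct_consts n) (x : 'I_n -> F) : 'M[F]_n :=
  \matrix_(i, j) \sum_(k < n) x k * c i j k.

(* JordanB mu n : Jordan 2n x 2n block with eigenvalue mu (n >= 1)
   JordanInf n  : Jordan 2n x 2n block with eigenvalue infinity (n >= 1)
   KronB k      : Kronecker (2k-1) x (2k-1) block (k >= 1) *)
Inductive jk_block := JordanB of F & nat | JordanInf of nat | KronB of nat.

Definition jk_block_valid (b : jk_block) : bool :=
  match b with JordanB _ n => 0 < n | JordanInf n => 0 < n | KronB k => 0 < k end%N.

Definition jordan_mx (mu : F) (n : nat) : 'M[F]_n :=
  \matrix_(i, j) ((i == j)%:R * mu + (j == i.+1 :> nat)%:R).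

Definition skew_pair (p q : nat) (M : 'M[F]_(p, q)) : 'M[F]_(p + q) :=
  block_mx 0 M (- M^T) 0.

Definition kronP (k : nat) : 'M[F]_(k.-1, k) := \matrix_(i, j) (i == j :> nat)%:R.
Definition kronQ (k : nat) : 'M[F]_(k.-1, k) := \matrix_(i, j) (j == i.+1 :> nat)%:R.

Definition mxpair := {m : nat & ('M[F]_m * 'M[F]_m)%type}.

Definition block_pair (b : jk_block) : mxpair :=
  match b with
  | JordanB mu n => existT _ (n + n) (skew_pair (jordan_mx mu n), skew_pair 1%:M)
  | JordanInf n => existT _ (n + n) (skew_pair 1%:M, skew_pair (jordan_mx 0 n))
  | KronB k => existT _ (k.-1 + k) (skew_pair (kronP k), skew_pair (kronQ k))
  end.

Fixpoint bdiag (s : seq jk_block) : mxpair :=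
  match s with
  | [::] => existT _ 0%N (0, 0)
  | b :: s' =>
      let: existT m1 (A1, B1) := block_pair b in
      let: existT m2 (A2, B2) := bdiag s' in
      existT _ (m1 + m2)%N (block_mx A1 0 0 A2, block_mx B1 0 0 B2)
  end.

Definition jk_form (n : nat) (A B : 'M[F]_n) (s : seq jk_block) : Prop :=
  all jk_block_valid s /\
  exists (P : 'M[F]_n) (e : projT1 (bdiag s) = n),
    [/\ P \in unitmx,
        P^T *m A *m P = castmx (e, e) (projT2 (bdiag s)).1 &
        P^T *m B *m P = castmx (e, e) (projT2 (bdiag s)).2].

Definition kron_size (b : jk_block) : option nat :=
  if b is KronB k then Some (k.*2).-1 else None.
Definition kron_sizes (s : seq jk_block) : seq nat := pmap kron_size s.

(* Jordan blocks: (eigenvalue, size 2n); eigenvalue None stands for infinity *)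
Definition jordan_data (b : jk_block) : option (option F * nat) :=
  match b with
  | JordanB mu n => Some (Some mu, n.*2)
  | JordanInf n => Some (None, n.*2)
  | KronB _ => None
  end.

Definition jordan_eigs (s : seq jk_block) : seq (option F) :=
  undup [seq p.1 | p <- pmap jordan_data s].

Definition jordan_tuple (s : seq jk_block) (e : option F) : seq nat :=
  sort geq [seq p.2 | p <- pmap jordan_data s & p.1 == e].

(* one tuple per distinct eigenvalue (eigenvalues themselves forgotten) *)
Definition jordan_tuples (s : seq jk_block) : seq (seq nat) :=
  [seq jordan_tuple s e | e <- jordan_eigs s].

(* P holds on a nonempty Zariski-open subset of F^m; the open set is the
   complement of the common zero locus of the finite family S. *)
Definition holds_on_nonempty_zopen (m : nat) (P : ('I_m -> F) -> Prop) : Prop :=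
  exists S : seq (mpoly.mpoly m F),
    (exists v : 'I_m -> F, has (fun p => mpoly.meval v p != 0) S) /\
    (forall v : 'I_m -> F, has (fun p => mpoly.meval v p != 0) S -> P v).

(* (K, J) are the Jordan--Kronecker invariants of the Lie algebra with
   structure constants c: for (x, a) in a nonempty Zariski-open subset of
   g^* x g^* (coordinates v = (x, a)), the pair (A_x, A_a) has Kronecker
   sizes K and multiset of Jordan tuples J (both as multisets). *)
Definition JK_invariants (n : nat) (c : struct_consts n)
  (K : seq nat) (J : seq (seq nat)) : Prop :=
  holds_on_nonempty_zopen
    (fun v : 'I_(n + n) -> F =>
       exists s : seq jk_block,
         [/\ jk_form (skew_form c (fun i => v (lshift n i)))
                     (skew_form c (fun i => v (rshift n i))) s,
             perm_eq (kron_sizes s) K &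
             perm_eq (jordan_tuples s) J]).

End JK.

(* Main.v *)
Require Import Defs.
From HB Require Import structures.
From mathcomp Require Import all_boot all_algebra.
From mathcomp Require Import complex.
From mathcomp Require Import reals.
From mathcomp Require mpoly.
From mathcomp Require Import mpoly.
From mathcomp Require Import ring zify.

Set Implicit Arguments. Unset Strict Implicit. Unset Printing Implicit Defensive.
Import GRing.Theory Num.Theory.
Local Open Scope ring_scope.


Section P1.
Variable F : fieldType.

Lemma bdiag_cons (b : jk_block F) s : bdiag (b :: s) =
  existT _ (projT1 (block_pair b) + projT1 (bdiag s))%N
   (block_mx (projT2 (block_pair b)).1 0 0 (projT2 (bdiag s)).1,
    block_mx (projT2 (block_pair b)).2 0 0 (projT2 (bdiag s)).2).
Proof.
rewrite /=; case: (block_pair b) => m [A B]; case: (bdiag s) => m' [A' B'].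
by [].
Qed.

Lemma existT_cast m m' (e : m = m') (A B : 'M[F]_m) :
  existT (fun k => ('M[F]_k * 'M[F]_k)%type) m' (castmx (e,e) A, castmx (e,e) B)
  = existT _ m (A, B).
Proof. by case: m' / e; rewrite !castmx_id. Qed.

Lemma block_mx_0l m (A0 : 'M[F]_0) (A : 'M[F]_m) :
  block_mx A0 0 0 A = A :> 'M_(0 + m).
Proof.
apply/matrixP=> i j; rewrite -(splitK i) -(splitK j).
case: (split i) => [[]//|i']; case: (split j) => [[]//|j'].
rewrite /= block_mxEdr; congr (A _ _); apply/val_inj => //.
Qed.

Lemma bdiag_cat (s1 s2 : seq (jk_block F)) : bdiag (s1 ++ s2) =
  existT _ (projT1 (bdiag s1) + projT1 (bdiag s2))%N
   (block_mx (projT2 (bdiag s1)).1 0 0 (projT2 (bdiag s2)).1,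
    block_mx (projT2 (bdiag s1)).2 0 0 (projT2 (bdiag s2)).2).
Proof.
elim: s1 => [|b s1 IH].
  rewrite /=; case: (bdiag s2) => m [A B] /=.
  by rewrite !block_mx_0l.
rewrite cat_cons !bdiag_cons IH /=.
case: (block_pair b) => mb [Ab Bb]; case: (bdiag s1) => m1 [A1 B1];
case: (bdiag s2) => m2 [A2 B2] /=.
rewrite -[in RHS](existT_cast (esym (addnA mb m1 m2))).
congr existT; congr pair.
- have := @block_mxA F mb m1 m2 mb m1 m2 Ab 0 0 0 A1 0 0 0 A2 => /=; rewrite !row_mx0 !col_mx0 => <-.
  by [].
- have := @block_mxA F mb m1 m2 mb m1 m2 Bb 0 0 0 B1 0 0 0 B2 => /=; rewrite !row_mx0 !col_mx0 => <-.
  by [].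
Qed.

Lemma jk_form_cat n1 n2 (A1 B1 : 'M[F]_n1) (A2 B2 : 'M[F]_n2) s1 s2 :
  jk_form A1 B1 s1 -> jk_form A2 B2 s2 ->
  jk_form (block_mx A1 0 0 A2) (block_mx B1 0 0 B2) (s1 ++ s2).
Proof.
case=> v1 [P1 [e1 [u1 h1 g1]]] [v2 [P2 [e2 [u2 h2 g2]]]].
split; first by rewrite all_cat v1 v2.
rewrite bdiag_cat.
move: e1 h1 g1 e2 h2 g2.
case: (bdiag s1) => m1 [X1 Y1]; case: (bdiag s2) => m2 [X2 Y2] /= e1 h1 g1 e2 h2 g2.
subst n1 n2; rewrite !castmx_id in h1 g1 h2 g2.
exists (block_mx P1 0 0 P2), erefl; rewrite !castmx_id; split.
- by rewrite unitmxE det_ublock unitrM -!unitmxE u1 u2.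
- by rewrite tr_block_mx !trmx0 !mulmx_block !(mul0mx, mulmx0, addr0, add0r) h1 h2.
- by rewrite tr_block_mx !trmx0 !mulmx_block !(mul0mx, mulmx0, addr0, add0r) g1 g2.
Qed.

Lemma split_lshift m n (k : 'I_m) : split (lshift n k) = inl k.
Proof. exact: (unsplitK (inl _ k)). Qed.
Lemma split_rshift m n (k : 'I_n) : split (rshift m k) = inr k.
Proof. exact: (unsplitK (inr _ k)). Qed.

Lemma skew_form_dsum n1 n2 (c1 : struct_consts F n1) (c2 : struct_consts F n2)
  (x : 'I_(n1 + n2) -> F) :
  skew_form (dsum_sc c1 c2) x =
  block_mx (skew_form c1 (fun i => x (lshift n2 i))) 0 0
           (skew_form c2 (fun i => x (rshift n1 i))).
Proof.
apply/matrixP=> i j; rewrite -(splitK i) -(splitK j).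
rewrite mxE big_split_ord /= /dsum_sc !unsplitK.
case: (split i) => i'; case: (split j) => j' /=;
  rewrite ?block_mxEul ?block_mxEur ?block_mxEdl ?block_mxEdr ?mxE;
  rewrite ?unsplitK ?split_lshift ?split_rshift.
- rewrite [X in _ + X]big1 ?addr0; last by move=> k _; rewrite split_rshift mulr0.
  by apply: eq_bigr => k _; rewrite split_lshift.
- by rewrite !big1 ?addr0 // => k _; rewrite ?split_lshift ?split_rshift mulr0.
- by rewrite !big1 ?addr0 // => k _; rewrite ?split_lshift ?split_rshift mulr0.
- rewrite big1 ?add0r; last by move=> k _; rewrite split_lshift mulr0.
  by apply: eq_bigr => k _; rewrite split_rshift.
Qed.

End P1.


Section P2.
Variable F : fieldType.
Implicit Types s : seq (jk_block F).

Lemma kron_sizes_cat s1 s2 : kron_sizes (s1 ++ s2) = kron_sizes s1 ++ kron_sizes s2.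
Proof. exact: pmap_cat. Qed.

Lemma filter_nil_notin s e : e \notin jordan_eigs s ->
  [seq p <- pmap (@jordan_data F) s | p.1 == e] = [::].
Proof.
move=> he; apply/eqP; rewrite -(negbK (_ == _)) -has_filter; apply/hasPn => p hp.
apply: contra he => /eqP <-; rewrite /jordan_eigs mem_undup.
by apply/mapP; exists p.
Qed.

Lemma jordan_tuples_cat s1 s2 :
  (forall e, e \in jordan_eigs s1 -> e \notin jordan_eigs s2) ->
  jordan_tuples (s1 ++ s2) = jordan_tuples s1 ++ jordan_tuples s2.
Proof.
move=> dis.
have E : jordan_eigs (s1 ++ s2) = jordan_eigs s1 ++ jordan_eigs s2.
  rewrite /jordan_eigs pmap_cat map_cat undup_cat; congr (_ ++ _).
  apply/all_filterP/allP => e he /=; have := dis e he.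
  by rewrite /jordan_eigs mem_undup.
rewrite /jordan_tuples E map_cat; congr (_ ++ _); apply/eq_in_map => e he;
  rewrite /jordan_tuple pmap_cat filter_cat.
- by rewrite (filter_nil_notin (dis e he)) cats0.
- have he1 : e \notin jordan_eigs s1 by apply: contraL he => /dis.
  by rewrite (filter_nil_notin he1).
Qed.

End P2.


Section P3.
Variable F : fieldType.

Lemma rank_mxsub_le m n m' n' (f : 'I_m' -> 'I_m) (g : 'I_n' -> 'I_n) (A : 'M[F]_(m, n)) :
  (\rank (mxsub f g A) <= \rank A)%N.
Proof.
rewrite mxsubrc rowsubE.
apply: leq_trans (mxrankM_maxr _ _) _.
have -> : colsub g A = A *m colsub g 1%:M by rewrite mulmx_colsub mulmx1.
exact: mxrankM_maxl.
Qed.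

Lemma utrig_unit n (M : 'M[F]_n) :
  (forall i j : 'I_n, (j < i)%N -> M i j = 0) -> (forall i, M i i != 0) ->
  M \in unitmx.
Proof.
move=> ht hd; rewrite -unitmx_tr unitmxE det_trig.
  by rewrite unitfE; apply/prodf_neq0 => i _; rewrite mxE.
by apply/is_trig_mxP => i j hij; rewrite mxE ht.
Qed.

Lemma rank_skew_pair p q (M : 'M[F]_(p, q)) :
  \rank (skew_pair M) = ((\rank M).*2)%N.
Proof.
pose Z : 'M[F]_(p + q, q + p) := block_mx 0 1%:M 1%:M 0.
pose Z' : 'M[F]_(q + p, p + q) := block_mx 0 1%:M 1%:M 0.
have ZZ : Z *m Z' = 1%:M.
  by rewrite /Z /Z' mulmx_block !(mul0mx, mulmx0, mul1mx, add0r, addr0) -scalar_mx_block.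
have fZ : row_free Z.
  rewrite -row_leq_rank; apply: leq_trans (mxrankM_maxl _ Z').
  by rewrite ZZ mxrank1.
rewrite -(mxrankMfree _ fZ) /skew_pair /Z mulmx_block.
rewrite !(mul0mx, mulmx0, mulmx1, add0r, addr0) rank_diag_block_mx.
by rewrite mxrank_opp mxrank_tr addnn.
Qed.

Lemma rank_sub_unit_ge m n r (A : 'M[F]_(m, n)) (f : 'I_r -> 'I_m) (g : 'I_r -> 'I_n) :
  mxsub f g A \in unitmx -> (r <= \rank A)%N.
Proof.
move=> u; have := rank_mxsub_le f g A; by rewrite mxrank_unit.
Qed.

Lemma jordan_mx_unit (mu : F) n : mu != 0 -> jordan_mx mu n \in unitmx.
Proof.
move=> hmu; apply: utrig_unit => [i j hij|i].
  rewrite mxE; case: eqP => [e|_]; first by rewrite e ltnn in hij.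
  case: eqP => [e|_]; last by rewrite !mul0r add0r.
  by exfalso; move: hij; rewrite e ltnNge leqnSn.
by rewrite mxE eqxx mul1r (_ : (i == i.+1 :> nat) = false) ?addr0 //; apply/eqP; exact: n_Sn.
Qed.

Lemma jordan_mx_sub (mu l : F) n : jordan_mx mu n - l *: 1%:M = jordan_mx (mu - l) n.
Proof.
by apply/matrixP => i j; rewrite !mxE; ring.
Qed.

Lemma rank_jordan0 n : (0 < n)%N -> \rank (jordan_mx (0:F) n) = n.-1.
Proof.
case: n => // n _ /=; apply/eqP; rewrite eqn_leq; apply/andP; split.
  rewrite -ltnS; have := rank_leq_row (jordan_mx (0:F) n.+1); rewrite leq_eqVlt.
  case/orP => // /eqP e; exfalso.
  have : jordan_mx (0 : F) n.+1 \in unitmx by rewrite -row_free_unit -row_leq_rank e.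
  rewrite -unitmx_tr unitmxE det_trig; last first.
    apply/is_trig_mxP => i j hij; rewrite !mxE; case: eqP => [e'|_].
      by rewrite e' ltnn in hij.
    case: eqP => [e'|_]; last by rewrite !mul0r add0r.
    by exfalso; move: hij; rewrite e' ltnNge leqnSn.
  by rewrite big_ord_recl !mxE /= mulr0 add0r mul0r unitr0.
pose f : 'I_n -> 'I_n.+1 := fun i => widen_ord (leqnSn n) i.
pose g : 'I_n -> 'I_n.+1 := fun i => lift ord0 i.
apply: (@rank_sub_unit_ge _ _ _ _ f g).
have -> : mxsub f g (jordan_mx (0:F) n.+1) = 1%:M.
  apply/matrixP => i j; rewrite !mxE /= mulr0 add0r /bump leq0n add1n eqSS.
  by rewrite eq_sym.
exact: unitmx1.
Qed.

Definition isKron (b : jk_block F) : bool := if b is KronB _ then true else false.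
Definition isJ (l : F) (b : jk_block F) : bool := if b is JordanB mu _ then mu == l else false.
Definition isInf (b : jk_block F) : bool := if b is JordanInf _ then true else false.

Lemma skew_pair_lin p q (M N : 'M[F]_(p, q)) l :
  skew_pair M - l *: skew_pair N = skew_pair (M - l *: N).
Proof.
rewrite /skew_pair scale_block_mx opp_block_mx add_block_mx.
rewrite !(scaler0, oppr0, addr0) linearB /=.
rewrite scalerN opprK opprB addrC; congr block_mx.
by rewrite addrC; congr (_ - _); apply/matrixP => i j; rewrite !mxE.
Qed.

Lemma rank_kron_pen k l : (0 < k)%N -> \rank (kronP F k - l *: kronQ F k) = k.-1.
Proof.
case: k => // k _ /=; apply/eqP; rewrite eqn_leq rank_leq_row /=.
pose f : 'I_k -> 'I_k := id.
pose g : 'I_k -> 'I_k.+1 := fun i => widen_ord (leqnSn k) i.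
apply: (@rank_sub_unit_ge _ _ _ _ f g).
apply: utrig_unit => [i j hij|i]; rewrite !mxE /=.
  have -> : (i == j :> nat) = false by apply/negbTE; rewrite neq_ltn hij orbT.
  have -> : (j == i.+1 :> nat) = false.
    by apply/negbTE; rewrite neq_ltn ltnS (ltnW hij).
  by rewrite mulr0 subr0.
by rewrite eqxx (ltn_eqF (ltnSn i)) !(mulr0, mul0r, addr0, subr0) oner_eq0.
Qed.

Lemma rank_kronQ k : (0 < k)%N -> \rank (kronQ F k) = k.-1.
Proof.
case: k => // k _ /=; apply/eqP; rewrite eqn_leq rank_leq_row /=.
pose f : 'I_k -> 'I_k := id.
pose g : 'I_k -> 'I_k.+1 := fun i => lift ord0 i.
apply: (@rank_sub_unit_ge _ _ _ _ f g).
have -> : mxsub f g (kronQ F k.+1) = 1%:M.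
  by apply/matrixP => i j; rewrite !mxE /= /bump leq0n add1n eqSS eq_sym.
exact: unitmx1.
Qed.

Lemma rank_castmx m n (e : m = n) (M : 'M[F]_m) : \rank (castmx (e,e) M) = \rank M.
Proof. by case: n / e; rewrite castmx_id. Qed.

Lemma block_rank_pen (b : jk_block F) (l : F) : jk_block_valid b ->
  (\rank ((projT2 (block_pair b)).1 - l *: (projT2 (block_pair b)).2)%R
    + isKron b + (isJ l b).*2 = projT1 (block_pair b))%N.
Proof.
case: b => [mu n|n|k] /= hv.
- rewrite skew_pair_lin rank_skew_pair jordan_mx_sub addn0.
  have [e|ne] := eqVneq mu l.
    rewrite e subrr rank_jordan0 //; case: n hv => // n _ /=. 
    lia.
  rewrite mxrank_unit ?jordan_mx_unit ?subr_eq0 //.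
  lia.
- have hu : (1%:M - l *: jordan_mx 0 n) \in unitmx.
    apply: utrig_unit => [i j hij|i]; rewrite !mxE.
      have -> : (i == j) = false by apply/negbTE; rewrite neq_ltn hij orbT.
      have -> : (j == i.+1 :> nat) = false.
        by apply/negbTE; rewrite neq_ltn ltnS (ltnW hij).
      by rewrite !(mulr0, mul0r, addr0, subr0).
    by rewrite eqxx (ltn_eqF (ltnSn i)) !(mulr0, mul0r, addr0, subr0) oner_eq0.
  rewrite skew_pair_lin rank_skew_pair mxrank_unit //; lia.
- rewrite skew_pair_lin rank_skew_pair rank_kron_pen // addn0.
  by case: k hv => // k _ /=; lia.
Qed.

Lemma block_rank_B (b : jk_block F) : jk_block_valid b ->
  (\rank (projT2 (block_pair b)).2 + isKron b + (isInf b).*2 = projT1 (block_pair b))%N.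
Proof.
case: b => [mu n|n|k] /= hv.
- rewrite rank_skew_pair mxrank1; lia.
- rewrite rank_skew_pair rank_jordan0 //; case: n hv => // n _ /=; lia.
- rewrite rank_skew_pair rank_kronQ // addn0.
  by case: k hv => // k _ /=; lia.
Qed.

Lemma bdiag_rank_pen (s : seq (jk_block F)) (l : F) : all (@jk_block_valid F) s ->
  (\rank ((projT2 (bdiag s)).1 - l *: (projT2 (bdiag s)).2)%R
    + count isKron s + (count (isJ l) s).*2 = projT1 (bdiag s))%N.
Proof.
elim: s => [|b s IH]; first by rewrite /= ?scaler0 ?subr0 mxrank0.
case/andP => hb hs; rewrite bdiag_cons /= scale_block_mx opp_block_mx add_block_mx.
rewrite !(scaler0, oppr0, addr0) rank_diag_block_mx.
have h1 := block_rank_pen l hb; have h2 := IH hs; rewrite doubleD; lia.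
Qed.

Lemma bdiag_rank_B (s : seq (jk_block F)) : all (@jk_block_valid F) s ->
  (\rank (projT2 (bdiag s)).2 + count isKron s + (count isInf s).*2 = projT1 (bdiag s))%N.
Proof.
elim: s => [|b s IH]; first by rewrite /= ?scaler0 ?subr0 mxrank0.
case/andP => hb hs; rewrite bdiag_cons /= rank_diag_block_mx.
have h1 := block_rank_B hb; have h2 := IH hs; rewrite doubleD; lia.
Qed.

Lemma rank_congr n (P X : 'M[F]_n) : P \in unitmx -> \rank (P^T *m X *m P) = \rank X.
Proof.
move=> u; rewrite mxrankMfree ?row_free_unit //.
by rewrite (eqmxMfull _ _) // row_full_unit unitmx_tr.
Qed.

Lemma jk_rank_pen n (A B : 'M[F]_n) s (l : F) : jk_form A B s ->
  (\rank (A - l *: B)%R + count isKron s + (count (isJ l) s).*2 = n)%N.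
Proof.
case=> hv [P [e [u hA hB]]].
rewrite -(rank_congr (A - l *: B) u) mulmxBr mulmxBl -!scalemxAr -scalemxAl hA hB.
have -> : castmx (e, e) (projT2 (bdiag s)).1 - l *: castmx (e, e) (projT2 (bdiag s)).2
  = castmx (e,e) ((projT2 (bdiag s)).1 - l *: (projT2 (bdiag s)).2).
  by case: n / e A B P u hA hB; rewrite !castmx_id.
by rewrite rank_castmx bdiag_rank_pen.
Qed.

Lemma jk_rank_B n (A B : 'M[F]_n) s : jk_form A B s ->
  (\rank B + count isKron s + (count isInf s).*2 = n)%N.
Proof.
case=> hv [P [e [u hA hB]]].
by rewrite -(rank_congr B u) hB rank_castmx bdiag_rank_B.
Qed.

Lemma count_kron_size (s : seq (jk_block F)) : size (kron_sizes s) = count isKron s.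
Proof. by rewrite /kron_sizes size_pmap; apply: eq_count => -[]. Qed.

End P3.


Lemma map_resultant_gen (aR rR : comNzRingType) (f : {rmorphism aR -> rR}) (p q : {poly aR}) :
    f (lead_coef p) != 0 -> f (lead_coef q) != 0 ->
  f (resultant p q) = resultant (map_poly f p) (map_poly f q).
Proof.
move=> nz_fp nz_fq; rewrite /resultant /Sylvester_mx !size_map_poly_id0 //.
rewrite -det_map_mx /= map_col_mx; congr (\det (col_mx _ _));
  by apply: map_lin1_mx => v; rewrite map_poly_rV rmorphM /= map_rVpoly.
Qed.

Lemma size_prod_le2 (R : comNzRingType) (I : Type) (s : seq I) (G : I -> {poly R}) :
  (forall i, (size (G i) <= 2)%N) -> (size (\prod_(i <- s) G i)%R <= (size s).+1)%N.
Proof.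
move=> h; elim: s => [|i s IH]; first by rewrite big_nil size_poly1.
rewrite big_cons; apply: leq_trans (size_polyMleq _ _) _.
have := h i; move: IH; rewrite /=; lia.
Qed.

Lemma size_det_le (R : comNzRingType) r (M : 'M[{poly R}]_r) :
  (forall i j, (size (M i j) <= 2)%N) -> (size (\det M) <= r.+1)%N.
Proof.
move=> h; rewrite /determinant; apply: leq_trans (size_sum _ _ _) _.
apply/bigmax_leqP => s _.
case: (perm.odd_perm s); rewrite ?expr1 ?expr0 ?mulN1r ?mul1r ?size_polyN;
  (apply: leq_trans (size_prod_le2 _ _) _; [move=> i; exact: h| by rewrite /index_enum -enumT size_enum_ord]).
Qed.

Section Num.
Variable F : fieldType.

Definition npen r (A B : 'M[F]_r) : {poly F} :=
  \det (map_mx polyC A - 'X *: map_mx polyC B).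

Lemma npen_horner r (A B : 'M[F]_r) l : (npen A B).[l] = \det (A - l *: B).
Proof.
rewrite /npen -horner_evalE -det_map_mx; congr (\det _).
apply/matrixP => i j; rewrite !mxE /= horner_evalE hornerD hornerN hornerM.
by rewrite hornerX !hornerC.
Qed.

Lemma npen_size r (A B : 'M[F]_r) : B \in unitmx ->
  size (npen A B) = r.+1 /\ (npen A B)`_r != 0.
Proof.
move=> uB.
have E : map_mx polyC A - 'X *: map_mx polyC B =
   - (char_poly_mx (A *m invmx B) *m map_mx polyC B).
  rewrite /char_poly_mx mulmxBl -scalemx1 -scalemxAl mul1mx -map_mxM.
  by rewrite -mulmxA mulVmx // mulmx1 opprB.
have sc : size (char_poly (A *m invmx B)) = r.+1 by rewrite size_char_poly.
have mc := char_poly_monic (A *m invmx B).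
rewrite /npen E -scaleN1r detZ det_mulmx det_map_mx -/(char_poly _).
have nz : (-1) ^+ r * \det B != 0.
  by rewrite mulf_neq0 ?signr_eq0 // -unitfE -unitmxE.
have -> : (-1) ^+ r * (char_poly (A *m invmx B) * (\det B)%:P) =
          ((-1) ^+ r * \det B)%:P * char_poly (A *m invmx B).
  by rewrite polyCM rmorphXn /= rmorphN1; ring.
rewrite size_Cmul // sc; split => //.
rewrite coefCM mulf_neq0 //.
have := mc; rewrite monicE lead_coefE sc => /eqP ->; exact: oner_neq0.
Qed.

End Num.

Section Closed.
Variable F : closedFieldType.

Lemma roots_list (P : {poly F}) : P != 0 ->
  exists rs : seq F, forall t, P.[t] = 0 -> t \in rs.
Proof.
move=> nz; have [rs E] := closed_field_poly_normal P.
exists rs => t; rewrite E hornerZ => /eqP; rewrite mulf_eq0 lead_coef_eq0 (negbTE nz) /=.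
by rewrite -root_prod_XsubC /root.
Qed.

End Closed.

Lemma exists_notin (F : numClosedFieldType) (L : seq F) : exists t, t \notin L.
Proof.
pose K := [seq k%:R : F | k <- iota 0 (size L).+1].
have : has (fun t => t \notin L) K.
  apply/negPn/negP; rewrite -all_predC => /allP hall.
  have : (size K <= size L)%N.
    apply: uniq_leq_size.
      rewrite map_inj_uniq ?iota_uniq // => a b /eqP; rewrite eqr_nat => /eqP //.
    by move=> y hy; have := hall y hy; rewrite /= negbK.
  by rewrite size_map size_iota ltnn.
by case/hasP => t _ ht; exists t.
Qed.


Lemma rmorph_meval (R S : comNzRingType) (f : {rmorphism R -> S}) k (v : 'I_k -> R)
  (p : {mpoly R[k]}) : f (p.@[v]) = (map_mpoly f p).@[fun i => f (v i)].
Proof.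
elim/mpolyind: p => [|c m p _ _ IH]; first by rewrite !raddf0.
rewrite !raddfD /= IH; congr (_ + _).
rewrite map_mpolyZ map_mpolyX -!mul_mpolyC !mevalM !mevalC !mevalX rmorphM /=.
by rewrite rmorph_prod; congr (_ * _); apply: eq_bigr => i _; rewrite rmorphXn.
Qed.

Section Line.
Variable F : fieldType.

Lemma meval_line k (p : {mpoly F[k]}) (u w : 'I_k -> F) t :
  ((map_mpoly (@polyC F) p).@[fun j => (u j)%:P + 'X * (w j)%:P]).[t]
  = p.@[fun j => u j + t * w j].
Proof.
rewrite -horner_evalE rmorph_meval.
have -> : map_mpoly (horner_eval t) (map_mpoly (@polyC F) p) = p.
  by apply/mpolyP => m; rewrite !mcoeff_map_mpoly /= horner_evalE hornerC.
apply: meval_eq => j /=.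
by rewrite horner_evalE hornerD hornerM hornerX !hornerC mulrC.
Qed.

Definition fskew (n k : nat) (c : struct_consts F n) (w : 'I_n -> 'I_k) : 'M[{mpoly F[k]}]_n :=
  \matrix_(i, j) \sum_(l < n) 'X_(w l) * (c i j l)%:MP.

Lemma fskew_eval n k (c : struct_consts F n) (w : 'I_n -> 'I_k) (v : 'I_k -> F) :
  map_mx (meval v) (fskew c w) = skew_form c (fun l => v (w l)).
Proof.
apply/matrixP => i j; rewrite !mxE raddf_sum /=; apply: eq_bigr => l _.
by rewrite mevalM mevalXU mevalC.
Qed.

Definition fpen k r (A B : 'M[{mpoly F[k]}]_r) : {poly {mpoly F[k]}} :=
  \det (map_mx polyC A - 'X *: map_mx polyC B).

Lemma fpen_eval k r (A B : 'M[{mpoly F[k]}]_r) (v : 'I_k -> F) :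
  map_poly (meval v) (fpen A B) = npen (map_mx (meval v) A) (map_mx (meval v) B).
Proof.
rewrite /fpen /npen -det_map_mx; congr (\det _).
apply/matrixP => i j; rewrite !mxE rmorphB rmorphM /= !map_polyC map_polyX.
by [].
Qed.

Lemma fpen_size k r (A B : 'M[{mpoly F[k]}]_r) : (size (fpen A B) <= r.+1)%N.
Proof.
apply: size_det_le => i j; rewrite !mxE.
apply: leq_trans (size_polyD _ _) _; rewrite geq_max size_polyN.
rewrite (leq_trans (size_polyC_leq1 _)) //=.
by rewrite mulrC mul_polyC (leq_trans (size_scale_leq _ _)) // size_polyX.
Qed.

End Line.

Lemma deform (F : closedFieldType) k (p : {mpoly F[k]}) (u w : 'I_k -> F) :
  p.@[u] != 0 -> exists L : seq F, forall t, t \notin L -> p.@[fun j => u j + t * w j] != 0.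
Proof.
move=> nz.
set P := (map_mpoly (@polyC F) p).@[fun j => (u j)%:P + 'X * (w j)%:P].
have P0 : P != 0.
  apply: contraNneq nz => e; have := meval_line p u w 0; rewrite -/P e horner0 => ->.
  by apply/eqP; apply: meval_eq => j; rewrite mul0r addr0.
have [L hL] := roots_list P0; exists L => t ht.
rewrite -(meval_line p u w t) -/P; apply: contra ht => /eqP; exact: hL.
Qed.


Section Helpers.
Variable F : fieldType.

Lemma skew_form_ext n (c : struct_consts F n) (u u' : 'I_n -> F) :
  u =1 u' -> skew_form c u = skew_form c u'.
Proof. by move=> e; apply/matrixP => i j; rewrite !mxE; apply: eq_bigr => k _; rewrite e. Qed.

Lemma skew_form_lin n (c : struct_consts F n) (a b : 'I_n -> F) (t : F) :
  skew_form c (fun i => a i + t * b i) = skew_form c a + t *: skew_form c b.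
Proof.
apply/matrixP => i j; rewrite !mxE mulr_sumr -big_split /=; apply: eq_bigr => k _.
by ring.
Qed.

Lemma mxsub_lin m n m' n' (f : 'I_m' -> 'I_m) (g : 'I_n' -> 'I_n) (A B : 'M[F]_(m, n)) l :
  mxsub f g (A + l *: B) = mxsub f g A + l *: mxsub f g B.
Proof. by apply/matrixP => i j; rewrite !mxE. Qed.

Lemma map_mxsub (R S : nzRingType) (h : R -> S) m n m' n' (f : 'I_m' -> 'I_m) (g : 'I_n' -> 'I_n)
  (A : 'M[R]_(m, n)) : map_mx h (mxsub f g A) = mxsub f g (map_mx h A).
Proof. by apply/matrixP => i j; rewrite !mxE. Qed.

Lemma rank_sub_exists m n r (A : 'M[F]_(m, n)) : \rank A = r ->
  exists f : {ffun 'I_r -> 'I_m}, exists g : {ffun 'I_r -> 'I_n}, mxsub f g A \in unitmx.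
Proof.
move=> <-.
pose f0 := maxrankfun A.
have fr : row_full (rowsub f0 A)^T.
  by rewrite /row_full mxrank_tr; exact: maxrowsub_free.
exists f0, (fullrankfun fr).
have := fullrowsub_unit fr; rewrite -unitmx_tr.
have -> : (rowsub (fullrankfun fr) (rowsub f0 A)^T)^T = mxsub f0 (fullrankfun fr) A.
  by apply/matrixP => i j; rewrite !mxE.
by [].
Qed.

Definition Jvals (s : seq (jk_block F)) : seq F :=
  pmap (fun b => if b is JordanB mu _ then Some mu else None) s.

Lemma count_isJ_notin (s : seq (jk_block F)) l : l \notin Jvals s -> count (isJ l) s = 0%N.
Proof.
elim: s => [|b s IH] //=; case: b => [mu k|k|k] /=; rewrite /Jvals /= => h; rewrite IH //.
by move: h; rewrite inE negb_or eq_sym => /andP [/negbTE -> _].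
by move: h; rewrite inE negb_or => /andP [_ ->].
Qed.

Lemma eig_mem (s : seq (jk_block F)) e : e \in jordan_eigs s ->
  (e = None /\ (0 < count (@isInf F) s)%N) \/ (exists mu, e = Some mu /\ (0 < count (isJ mu) s)%N).
Proof.
rewrite /jordan_eigs mem_undup; elim: s => [|b s IH] //=.
case: b => [mu k|k|k] /=; rewrite ?inE.
- case/orP => [/eqP ->|/IH]; first by right; exists mu; rewrite eqxx.
  case=> [[-> h]|[mu' [-> h]]]; [left|right; exists mu']; split => //; lia.
- case/orP => [/eqP ->|/IH]; first by left.
  case=> [[-> h]|[mu' [-> h]]]; [left|right; exists mu']; split => //; lia.
- move/IH; case=> [[-> h]|[mu' [-> h]]]; [left|right; exists mu']; split => //; lia.
Qed.

End Helpers.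


Lemma arith2 a b c n k : (a + b + c.*2 = n)%N -> b = k -> c = 0%N -> a = (n - k)%N.
Proof. move=> *; lia. Qed.

Lemma step_gen (F : numClosedFieldType) n (c : struct_consts F n) (K : seq nat)
  (u : 'I_(n + n) -> F) (p : {mpoly F[n + n]}) (s0 : seq (jk_block F)) :
  p.@[u] != 0 ->
  jk_form (skew_form c (fun i => u (lshift n i))) (skew_form c (fun i => u (rshift n i))) s0 ->
  perm_eq (kron_sizes s0) K ->
  exists u' : 'I_(n + n) -> F, exists f : {ffun 'I_(n - size K) -> 'I_n},
  exists g : {ffun 'I_(n - size K) -> 'I_n},
   p.@[u'] != 0 /\ mxsub f g (skew_form c (fun i => u' (rshift n i))) \in unitmx.
Proof.
move=> hp j0 k0.
set X := skew_form c (fun i => u (lshift n i)).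
set Y := skew_form c (fun i => u (rshift n i)).
have cK : count (@isKron F) s0 = size K by rewrite -count_kron_size (perm_size k0).
have rk l : l \notin Jvals s0 -> \rank (X - l *: Y) = (n - size K)%N.
  move=> hl; exact: (arith2 (jk_rank_pen l j0) cK (count_isJ_notin hl)).
pose w : 'I_(n + n) -> F := fun j => match split j with inl _ => 0 | inr i => u (lshift n i) end.
have [L hL] := deform w hp.
have [t ht] := exists_notin (0 :: [seq - (mu^-1) | mu <- Jvals s0] ++ L).
move: ht; rewrite inE mem_cat !negb_or => /andP [t0 /andP [tJ tL]].
exists (fun j => u j + t * w j).
have EY : skew_form c (fun i => u (rshift n i) + t * w (rshift n i)) = t *: (X - (- t^-1) *: Y).
  rewrite (skew_form_ext c (u' := fun i => u (rshift n i) + t * u (lshift n i))); last first.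
    by move=> i; rewrite /w split_rshift.
  rewrite skew_form_lin scalerBr scalerA mulrN mulrV ?unitfE // scaleN1r opprK addrC.
  by [].
have hl : - t^-1 \notin Jvals s0.
  apply: contra tJ => h; apply/mapP; exists (- t^-1) => //.
  by rewrite invrN invrK opprK.
have [f [g hu]] := rank_sub_exists (etrans (mxrank_scale_nz _ t0) (rk _ hl) : \rank (t *: (X - (- t^-1) *: Y)) = _).
exists f, g; split; first exact: hL.
by rewrite EY.
Qed.


Section Main.
Variable F : numClosedFieldType.
Variables n1 n2 : nat.
Variables (c1 : struct_consts F n1) (c2 : struct_consts F n2).
Variables (K1 K2 : seq nat) (J1 J2 : seq (seq nat)).

Local Notation N := (n1 + n2)%N.
Local Notation MP := {mpoly F[N + N]}.

Definition s1i (j : 'I_(n1 + n1)) : 'I_(N + N) :=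
  match split j with inl i => lshift N (lshift n2 i) | inr i => rshift N (lshift n2 i) end.
Definition s2i (j : 'I_(n2 + n2)) : 'I_(N + N) :=
  match split j with inl i => lshift N (rshift n1 i) | inr i => rshift N (rshift n1 i) end.

Definition xw1 (i : 'I_n1) : 'I_(N + N) := lshift N (lshift n2 i).
Definition aw1 (i : 'I_n1) : 'I_(N + N) := rshift N (lshift n2 i).
Definition xw2 (i : 'I_n2) : 'I_(N + N) := lshift N (rshift n1 i).
Definition aw2 (i : 'I_n2) : 'I_(N + N) := rshift N (rshift n1 i).

Definition lift1 (p : {mpoly F[n1 + n1]}) : MP :=
  p \mPo [tuple 'X_(s1i i) | i < n1 + n1].
Definition lift2 (p : {mpoly F[n2 + n2]}) : MP :=
  p \mPo [tuple 'X_(s2i i) | i < n2 + n2].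

Lemma lift1_eval p (v : 'I_(N + N) -> F) : (lift1 p).@[v] = p.@[fun j => v (s1i j)].
Proof.
rewrite /lift1 comp_mpoly_meval; apply: meval_eq => j.
by rewrite tnth_mktuple mevalXU.
Qed.
Lemma lift2_eval p (v : 'I_(N + N) -> F) : (lift2 p).@[v] = p.@[fun j => v (s2i j)].
Proof.
rewrite /lift2 comp_mpoly_meval; apply: meval_eq => j.
by rewrite tnth_mktuple mevalXU.
Qed.

Definition r1 := (n1 - size K1)%N.
Definition r2 := (n2 - size K2)%N.

Definition TT := ({ffun 'I_r1 -> 'I_n1} * {ffun 'I_r1 -> 'I_n1} *
                   ({ffun 'I_r2 -> 'I_n2} * {ffun 'I_r2 -> 'I_n2}))%type.

Definition SA1 := fskew c1 xw1.
Definition SB1 := fskew c1 aw1.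
Definition SA2 := fskew c2 xw2.
Definition SB2 := fskew c2 aw2.

Definition fpol1 (t : TT) := fpen (mxsub t.1.1 t.1.2 SA1) (mxsub t.1.1 t.1.2 SB1).
Definition fpol2 (t : TT) := fpen (mxsub t.2.1 t.2.2 SA2) (mxsub t.2.1 t.2.2 SB2).
Definition fD1 (t : TT) : MP := \det (mxsub t.1.1 t.1.2 SB1).
Definition fD2 (t : TT) : MP := \det (mxsub t.2.1 t.2.2 SB2).

Definition QQ p q (t : TT) : MP :=
  lift1 p * lift2 q * fD1 t * fD2 t * lead_coef (fpol1 t) * lead_coef (fpol2 t)
  * resultant (fpol1 t) (fpol2 t).

Definition X1 (v : 'I_(N + N) -> F) := skew_form c1 (fun i => v (xw1 i)).
Definition Y1 (v : 'I_(N + N) -> F) := skew_form c1 (fun i => v (aw1 i)).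
Definition X2 (v : 'I_(N + N) -> F) := skew_form c2 (fun i => v (xw2 i)).
Definition Y2 (v : 'I_(N + N) -> F) := skew_form c2 (fun i => v (aw2 i)).

Lemma s1i_l (v : 'I_(N + N) -> F) i : v (s1i (lshift n1 i)) = v (xw1 i).
Proof. by rewrite /s1i split_lshift. Qed.
Lemma s1i_r (v : 'I_(N + N) -> F) i : v (s1i (rshift n1 i)) = v (aw1 i).
Proof. by rewrite /s1i split_rshift. Qed.
Lemma s2i_l (v : 'I_(N + N) -> F) i : v (s2i (lshift n2 i)) = v (xw2 i).
Proof. by rewrite /s2i split_lshift. Qed.
Lemma s2i_r (v : 'I_(N + N) -> F) i : v (s2i (rshift n2 i)) = v (aw2 i).
Proof. by rewrite /s2i split_rshift. Qed.

Lemma fpol1_eval t v : map_poly (meval v) (fpol1 t) =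
  npen (mxsub t.1.1 t.1.2 (X1 v)) (mxsub t.1.1 t.1.2 (Y1 v)).
Proof. by rewrite /fpol1 fpen_eval !map_mxsub !fskew_eval. Qed.
Lemma fpol2_eval t v : map_poly (meval v) (fpol2 t) =
  npen (mxsub t.2.1 t.2.2 (X2 v)) (mxsub t.2.1 t.2.2 (Y2 v)).
Proof. by rewrite /fpol2 fpen_eval !map_mxsub !fskew_eval. Qed.
Lemma fD1_eval t v : (fD1 t).@[v] = \det (mxsub t.1.1 t.1.2 (Y1 v)).
Proof. by rewrite /fD1 -det_map_mx map_mxsub fskew_eval. Qed.
Lemma fD2_eval t v : (fD2 t).@[v] = \det (mxsub t.2.1 t.2.2 (Y2 v)).
Proof. by rewrite /fD2 -det_map_mx map_mxsub fskew_eval. Qed.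

Definition PP1 (u : 'I_(n1 + n1) -> F) : Prop :=
  exists s : seq (jk_block F),
    [/\ jk_form (skew_form c1 (fun i => u (lshift n1 i))) (skew_form c1 (fun i => u (rshift n1 i))) s,
        perm_eq (kron_sizes s) K1 & perm_eq (jordan_tuples s) J1].
Definition PP2 (u : 'I_(n2 + n2) -> F) : Prop :=
  exists s : seq (jk_block F),
    [/\ jk_form (skew_form c2 (fun i => u (lshift n2 i))) (skew_form c2 (fun i => u (rshift n2 i))) s,
        perm_eq (kron_sizes s) K2 & perm_eq (jordan_tuples s) J2].
Definition PPS (v : 'I_(N + N) -> F) : Prop :=
  exists s : seq (jk_block F),
    [/\ jk_form (skew_form (dsum_sc c1 c2) (fun i => v (lshift N i)))
                (skew_form (dsum_sc c1 c2) (fun i => v (rshift N i))) s,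
        perm_eq (kron_sizes s) (K1 ++ K2) & perm_eq (jordan_tuples s) (J1 ++ J2)].

Lemma arith1 a b c n k : (a + b + c.*2 = n)%N -> b = k -> (n - k <= a)%N -> (0 < c)%N -> False.
Proof. move=> *; lia. Qed.

Lemma at1 v s : (exists2 p, p \in s & p.@[fun j => v (s1i j)] != 0) ->
  has (fun p : {mpoly F[n1 + n1]} => p.@[fun j => v (s1i j)] != 0) s.
Proof. by case=> p hp nz; apply/hasP; exists p. Qed.

Lemma sound (S1 : seq {mpoly F[n1 + n1]}) (S2 : seq {mpoly F[n2 + n2]})
  (HS1 : forall u, has (fun p => p.@[u] != 0) S1 -> PP1 u)
  (HS2 : forall u, has (fun p => p.@[u] != 0) S2 -> PP2 u)
  v p q t : p \in S1 -> q \in S2 -> (QQ p q t).@[v] != 0 -> PPS v.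
Proof.
move=> pS qS; rewrite /QQ !mevalM !mulf_eq0 !negb_or.
move=> /andP[/andP[/andP[/andP[/andP[/andP[hp hq] hD1] hD2] hL1] hL2] hR].
rewrite lift1_eval in hp; rewrite lift2_eval in hq.
have [s1 [j1 k1 jj1]] : PP1 (fun j => v (s1i j)) by apply: HS1; apply/hasP; exists p.
have [s2 [j2 k2 jj2]] : PP2 (fun j => v (s2i j)) by apply: HS2; apply/hasP; exists q.
rewrite (skew_form_ext c1 (s1i_l v)) (skew_form_ext c1 (s1i_r v)) in j1.
rewrite (skew_form_ext c2 (s2i_l v)) (skew_form_ext c2 (s2i_r v)) in j2.
have cK1 : count (@isKron F) s1 = size K1 by rewrite -count_kron_size (perm_size k1).
have cK2 : count (@isKron F) s2 = size K2 by rewrite -count_kron_size (perm_size k2).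
have nzP (P : {poly MP}) : (lead_coef P).@[v] != 0 -> map_poly (meval v) P != 0.
  move=> h; rewrite map_poly_eq0_id0 //; apply: contra h => /eqP ->.
  by rewrite lead_coef0 meval0.
exists (s1 ++ s2); split.
- rewrite !skew_form_dsum; have := jk_form_cat j1 j2.
  by rewrite /xw1 /aw1 /xw2 /aw2.
- by rewrite kron_sizes_cat perm_cat.
rewrite jordan_tuples_cat ?perm_cat // => e he1; apply/negP => he2.
case: (eig_mem he1) => [[e0 hinf]|[mu [e0 hmu1]]]; subst e.
  have rk := jk_rank_B j1.
  rewrite fD1_eval -unitfE -unitmxE in hD1.
  exact: (arith1 rk cK1 (rank_sub_unit_ge hD1) hinf).
case: (eig_mem he2) => [[//]|[mu' [[e0] hmu2]]]; subst mu'.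
have z1 : (npen (mxsub t.1.1 t.1.2 (X1 v)) (mxsub t.1.1 t.1.2 (Y1 v))).[mu] = 0.
  rewrite npen_horner; apply/eqP; apply: contraT => nz; exfalso.
  have rk := jk_rank_pen mu j1.
  have E : mxsub t.1.1 t.1.2 (X1 v) - mu *: mxsub t.1.1 t.1.2 (Y1 v) =
           mxsub t.1.1 t.1.2 (X1 v - mu *: Y1 v) by apply/matrixP => i j; rewrite !mxE.
  rewrite E -unitfE -unitmxE in nz.
  exact: (arith1 rk cK1 (rank_sub_unit_ge nz) hmu1).
have z2 : (npen (mxsub t.2.1 t.2.2 (X2 v)) (mxsub t.2.1 t.2.2 (Y2 v))).[mu] = 0.
  rewrite npen_horner; apply/eqP; apply: contraT => nz; exfalso.
  have rk := jk_rank_pen mu j2.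
  have E : mxsub t.2.1 t.2.2 (X2 v) - mu *: mxsub t.2.1 t.2.2 (Y2 v) =
           mxsub t.2.1 t.2.2 (X2 v - mu *: Y2 v) by apply/matrixP => i j; rewrite !mxE.
  rewrite E -unitfE -unitmxE in nz.
  exact: (arith1 rk cK2 (rank_sub_unit_ge nz) hmu2).
have h1nz := nzP _ hL1; have h2nz := nzP _ hL2.
move: hR; rewrite (@map_resultant_gen _ _ (meval v)) // resultant_eq0 fpol1_eval fpol2_eval.
rewrite fpol1_eval in h1nz; rewrite fpol2_eval in h2nz.
apply/negP/negPn; apply: (@root_size_gt1 _ mu).
  by rewrite gcdp_eq0 negb_and h1nz.
by rewrite root_gcd /root z1 z2 eqxx.
Qed.

Lemma lead_eval (P : {poly MP}) r (v : 'I_(N + N) -> F) :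
  (size P <= r.+1)%N -> size (map_poly (meval v) P) = r.+1 ->
  (map_poly (meval v) P)`_r != 0 -> (lead_coef P).@[v] != 0.
Proof.
move=> hs hm hc.
have hle : (size (map_poly (meval v) P) <= size P)%N.
  by rewrite map_polyE (leq_trans (size_Poly _)) // size_map.
have e : size P = r.+1 by apply/eqP; rewrite eqn_leq hs -hm hle.
by rewrite lead_coefE e /= -coef_map.
Qed.

Lemma nonempty (S1 : seq {mpoly F[n1 + n1]}) (S2 : seq {mpoly F[n2 + n2]})
  (HS1 : forall u, has (fun p => p.@[u] != 0) S1 -> PP1 u)
  (HS2 : forall u, has (fun p => p.@[u] != 0) S2 -> PP2 u)
  (ne1 : exists u, has (fun p => p.@[u] != 0) S1)
  (ne2 : exists u, has (fun p => p.@[u] != 0) S2) :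
  exists v, exists p, exists q, exists t, [/\ p \in S1, q \in S2 & (QQ p q t).@[v] != 0].
Proof.
case: ne1 => u1 hu1; have [s1 [j1 k1 _]] := HS1 u1 hu1.
case/hasP: hu1 => p pS hp.
case: ne2 => u2 hu2; have [s2 [j2 k2 _]] := HS2 u2 hu2.
case/hasP: hu2 => q qS hq.
have [u1' [f1 [g1 [hp' un1]]]] := step_gen hp j1 k1.
have [u2' [f2 [g2 [hq' un2]]]] := step_gen hq j2 k2.
set X1' := skew_form c1 (fun i => u1' (lshift n1 i)).
set Y1' := skew_form c1 (fun i => u1' (rshift n1 i)).
set X2' := skew_form c2 (fun i => u2' (lshift n2 i)).
set Y2' := skew_form c2 (fun i => u2' (rshift n2 i)).
set h1 := npen (mxsub f1 g1 X1') (mxsub f1 g1 Y1').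
set h2 := npen (mxsub f2 g2 X2') (mxsub f2 g2 Y2').
have [sz1 cf1] := npen_size (mxsub f1 g1 X1') un1.
have [sz2 cf2] := npen_size (mxsub f2 g2 X2') un2.
have h1nz : h1 != 0 by rewrite -size_poly_gt0 /h1 sz1.
have h2nz : h2 != 0 by rewrite -size_poly_gt0 /h2 sz2.
have [R1 hR1] := roots_list h1nz.
have [R2 hR2] := roots_list h2nz.
pose w3 : 'I_(n2 + n2) -> F := fun j => match split j with inl i => u2' (rshift n2 i) | inr _ => 0 end.
have [L3 hL3] := deform w3 hq'.
have [s hs] := exists_notin ([seq a - b | a <- R1, b <- R2] ++ L3).
move: hs; rewrite mem_cat negb_or => /andP [sR sL].
pose u2'' := fun j => u2' j + s * w3 j.
have hq'' : q.@[u2''] != 0 by exact: hL3.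
pose v : 'I_(N + N) -> F := fun j => match split j with
  | inl i => match split i with inl i1 => u1' (lshift n1 i1) | inr i2 => u2'' (lshift n2 i2) end
  | inr i => match split i with inl i1 => u1' (rshift n1 i1) | inr i2 => u2'' (rshift n2 i2) end end.
have eX1 : X1 v = X1' by apply: skew_form_ext => i; rewrite /v /xw1 !split_lshift.
have eY1 : Y1 v = Y1' by apply: skew_form_ext => i; rewrite /v /aw1 split_rshift split_lshift.
have eX2 : X2 v = X2' + s *: Y2'.
  rewrite -skew_form_lin; apply: skew_form_ext => i.
  by rewrite /v /xw2 split_lshift split_rshift /u2'' /w3 split_lshift.
have eY2 : Y2 v = Y2'.
  apply: skew_form_ext => i.
  by rewrite /v /aw2 !split_rshift /u2'' /w3 split_rshift mulr0 addr0.
have e1 : (fun j => v (s1i j)) =1 u1'.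
  by move=> j; rewrite -(splitK j); case: (split j) => i /=;
    rewrite /s1i ?(split_lshift, split_rshift) /v ?(split_lshift, split_rshift).
have e2 : (fun j => v (s2i j)) =1 u2''.
  by move=> j; rewrite -(splitK j); case: (split j) => i /=;
    rewrite /s2i ?(split_lshift, split_rshift) /v ?(split_lshift, split_rshift).
pose t : TT := (f1, g1, (f2, g2)).
have E1 : map_poly (meval v) (fpol1 t) = h1 by rewrite fpol1_eval /= eX1 eY1.
have E2 : map_poly (meval v) (fpol2 t) = npen (mxsub f2 g2 (X2' + s *: Y2')) (mxsub f2 g2 Y2').
  by rewrite fpol2_eval /= eX2 eY2.
have [sz2' cf2'] := npen_size (mxsub f2 g2 (X2' + s *: Y2')) un2.
have L1 : (lead_coef (fpol1 t)).@[v] != 0.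
  by apply: (@lead_eval _ (r1)); rewrite ?fpen_size ?E1.
have L2 : (lead_coef (fpol2 t)).@[v] != 0.
  by apply: (@lead_eval _ (r2)); rewrite ?fpen_size ?E2.
exists v, p, q, t; split => //.
rewrite /QQ !mevalM !mulf_neq0 //.
- by rewrite lift1_eval (meval_eq _ e1).
- by rewrite lift2_eval (meval_eq _ e2).
- by rewrite fD1_eval /= eY1 -unitfE -unitmxE.
- by rewrite fD2_eval /= eY2 -unitfE -unitmxE.
rewrite (@map_resultant_gen _ _ (meval v)) // E1 E2 resultant_eq0 -leqNgt.
rewrite leqNgt; apply/negP => hg.
have /closed_rootP [l hl] : size (gcdp h1 (npen (mxsub f2 g2 (X2' + s *: Y2')) (mxsub f2 g2 Y2'))) != 1%N.
  by rewrite neq_ltn hg orbT.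
move: hl; rewrite root_gcd => /andP [/eqP r1l /eqP r2l].
have l1 := hR1 _ r1l.
have l2 : l - s \in R2.
  apply: hR2; rewrite npen_horner; move: r2l; rewrite npen_horner.
  have -> : mxsub f2 g2 (X2' + s *: Y2') - l *: mxsub f2 g2 Y2' =
            mxsub f2 g2 X2' - (l - s) *: mxsub f2 g2 Y2'.
    by apply/matrixP => i j; rewrite !mxE; ring.
  by [].
move/negP: sR; apply; apply/allpairsP; exists (l, l - s) => /=; split => //.
by ring.
Qed.

Lemma main_gen : JK_invariants c1 K1 J1 -> JK_invariants c2 K2 J2 ->
    JK_invariants (dsum_sc c1 c2) (K1 ++ K2) (J1 ++ J2).
Proof.
move=> [S1 [ne1 HS1]] [S2 [ne2 HS2]].
exists [seq QQ pq.1 pq.2 t | pq <- [seq (p, q) | p <- S1, q <- S2], t <- enum {: TT}].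
split.
- have [v [p [q [t [pS qS nz]]]]] := nonempty HS1 HS2 ne1 ne2.
  exists v; apply/hasP; exists (QQ p q t) => //.
  apply/allpairsP; exists ((p, q), t); split => //; last by rewrite mem_enum.
  by apply/allpairsP; exists (p, q).
- move=> v /hasP [z /allpairsP [[pq t] [hpq _ ->]] nz].
  case/allpairsP: hpq => [[p q] [pS qS epq]]; rewrite epq /= in nz.
  exact: (sound HS1 HS2 pS qS nz).
Qed.

End Main.


Unset Implicit Arguments.

Theorem theorem4 (R : realType) (n1 n2 : nat)
  (c1 : struct_consts R[i] n1) (c2 : struct_consts R[i] n2) :
  is_lie_sc c1 -> is_lie_sc c2 ->
  forall (K1 K2 : seq nat) (J1 J2 : seq (seq nat)),
    JK_invariants c1 K1 J1 -> JK_invariants c2 K2 J2 ->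
    JK_invariants (dsum_sc c1 c2) (K1 ++ K2) (J1 ++ J2).
Proof.
move=> _ _ K1 K2 J1 J2; exact: main_gen.
Qed.
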